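(* Let $f=\sum_{P\in\mathcal{M}} a_P x^P$ be a nonzero real polynomial in $x_1,\ldots,x_n$, where $\mathcal{M}\subseteq\mathbb{N}^n$ is the set of exponent vectors of monomials occurring in $f$ (so $a_P\neq 0$ for $P\in\mathcal{M}$). Then for every integer $k\ge 0$, $$\dim \partial^{=k} f \geq \frac{\sum_{P \in \mathcal{M}} \binom{\sup(P)}{k}a_P^2}{|\mathcal{M}|\sum_{P \in \mathcal{M}} a_P^2}.$$
   Context: For $\alpha\in\mathbb{N}^n$, $x^\alpha = x_1^{\alpha_1}\cdots x_n^{\alpha_n}/(\alpha_1!\cdots\alpha_n!)$ (scaled monomial basis); the coefficients $a_P$ are with respect to this basis. $\sup(P)$ is the number of indices $i$ with $P_i>0$. For $\beta\in\mathbb{N}^n$, $\partial_\beta f$ is the partial derivative differentiating $\beta_i$ times with respect to $x_i$; $\partial^{=k} f$ is the real linear span of all $\partial_\beta f$ with $\beta_1+\cdots+\beta_n=k$. *)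

(* Defs.v *)
From HB Require Import structures.
From mathcomp Require Import all_boot all_order all_algebra.
From mathcomp Require Import mpoly.
Set Implicit Arguments. Unset Strict Implicit. Unset Printing Implicit Defensive.
Import Order.TTheory GRing.Theory Num.Theory.
Local Open Scope ring_scope.

Section Defs.
Variables (R : realFieldType) (n : nat).

Definition mnm_fact (m : 'X_{1..n}) : nat := (\prod_(i < n) (m i)`!)%N.

(* coefficient a_P of f w.r.t. the scaled basis x^P / P! : a_P = P! * [x^P] f *)
Definition scoef (f : {mpoly R[n]}) (m : 'X_{1..n}) : R := (mnm_fact m)%:R * f@_m.

Definition mnm_sup (m : 'X_{1..n}) : nat := #|[set i : 'I_n | (0 < m i)%N]|.

Definition in_dspan (k : nat) (f q : {mpoly R[n]}) : Prop :=
  exists (s : seq 'X_{1..n}) (c : 'X_{1..n} -> R),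
    all (fun b => mdeg b == k) s /\ q = \sum_(b <- s) c b *: f^`M[b].

Definition lin_indep (d : nat) (v : 'I_d -> {mpoly R[n]}) : Prop :=
  forall c : 'I_d -> R, \sum_(i < d) c i *: v i = 0 -> forall i, c i = 0.

Definition is_dim_dspan (k : nat) (f : {mpoly R[n]}) (d : nat) : Prop :=
  (exists v : 'I_d -> {mpoly R[n]}, (forall i, in_dspan k f (v i)) /\ lin_indep v) /\
  (forall v : 'I_d.+1 -> {mpoly R[n]}, (forall i, in_dspan k f (v i)) -> ~ lin_indep v).

End Defs.

(* Main.v *)
Require Import Defs.
From HB Require Import structures.
From mathcomp Require Import all_boot all_order all_algebra.
From mathcomp Require Import mpoly.
Import Order.TTheory GRing.Theory Num.Theory.
Local Open Scope ring_scope.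
Lemma coef_derivm (R : numDomainType) n (b : 'X_{1..n}) (p : {mpoly R[n]}) L :
  ((p^`M[b])@_L == 0) = (p@_(L + b) == 0).
Proof.
move: {2}(mdeg b) (erefl (mdeg b)) => d.
elim: d b p L => [|d IH] b p L Hb.
  have : b == 0%MM by rewrite -mdeg_eq0 Hb.
  by move/eqP->; rewrite mderivm0m addm0.
case: (pickP (fun i => 0 < b i)%N) => [i Hi | H]; last first.
  have b0 : b = 0%MM.
    apply/mnmP => i; rewrite mnm0E; move: (H i) => /=.
    by case: (b i).
  by move: Hb; rewrite b0 mdeg0.
have le1 : (U_(i) <= b)%MM.
  apply/mnm_lepP => j; rewrite mnm1E; case: eqP => [<-|] //.
have Eb : b = (U_(i) + (b - U_(i)))%MM by rewrite addmC submK.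
have Hd : mdeg (b - U_(i)) = d.
  by move: Hb; rewrite {1}Eb mdegD mdeg1 add1n => -[].
rewrite Eb mderivmDm mderivmU1m IH // mcoeff_deriv mulrn_eq0 /=.
by rewrite -addmA [(_ + U_(i))%MM]addmC -Eb.
Qed.

Lemma indep_mlead (R : realFieldType) n d (v : 'I_d -> {mpoly R[n]}) :
  (forall i, v i != 0) -> injective (fun i => mlead (v i)) -> lin_indep v.
Proof.
move=> nz inj c Hs i; apply/eqP/negPn/negP => ci.
pose J := [pred j | c j != 0].
have Ji : J i by [].
case: (@arg_maxP _ _ _ i J (fun j => mlead (v j)) Ji) => j Jj Hj.
have : (\sum_(k < d) c k *: v k)@_(mlead (v j)) = 0 by rewrite Hs mcoeff0.
rewrite raddf_sum (bigD1 j) //= big1 ?addr0.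
  rewrite mcoeffZ => /eqP; rewrite mulf_eq0 mleadc_eq0 (negbTE (nz j)) orbF.
  by rewrite (negbTE Jj).
move=> k kj; rewrite mcoeffZ.
have [->|ck] := eqVneq (c k) 0; first by rewrite mul0r.
rewrite mcoeff_gt_mlead ?mulr0 //.
have := Hj k ck; rewrite /= lt_neqAle => ->; rewrite andbT; case: eqP => // /inj E.
by rewrite E eqxx in kj.
Qed.

Definition beta n (B : {set 'I_n}) : 'X_{1..n} := \big[+%MM/0%MM]_(i in B) U_(i)%MM.

Arguments beta {n}.
Lemma betaE n (B : {set 'I_n}) (j : 'I_n) : beta B j = (j \in B).
Proof.
rewrite /beta mnm_sumE big_mkcond (bigD1 j) //= big1 => [|i ij].
  by rewrite mnm1E eqxx addn0; case: (j \in B).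
by rewrite mnm1E (negbTE ij); case: (i \in B).
Qed.

Lemma mdeg_beta n (B : {set 'I_n}) : mdeg (beta B) = #|B|.
Proof.
by rewrite /beta mdeg_sum (eq_bigr (fun _ => 1%N)) ?sum1_card // => i _; rewrite mdeg1.
Qed.

Lemma beta_inj n : injective (@beta n).
Proof.
move=> B1 B2 E; apply/setP => j; have := congr1 (fun m : 'X_{1..n} => m j) E.
by rewrite /= !betaE; case: (j \in B1); case: (j \in B2).
Qed.

Lemma core (R : realFieldType) n (f : {mpoly R[n]}) k d P :
  P \in msupp f -> is_dim_dspan k f d -> ('C(mnm_sup P, k) <= size (msupp f) * d)%N.
Proof.
move=> PM [_ Hd].
pose T := [set i : 'I_n | (0 < P i)%N].
pose S := [set B : {set 'I_n} | B \subset T & #|B| == k].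
have -> : 'C(mnm_sup P, k) = #|S| by rewrite cards_draws.
pose g (B : {set 'I_n}) := f^`M[beta B].
pose lm B := mlead (g B).
have bP B : B \in S -> (beta B <= P)%MM.
  rewrite inE => /andP[/subsetP sBT _]; apply/mnm_lepP => j; rewrite betaE.
  case jB: (j \in B) => //; have := sBT j jB; by rewrite inE.
have gnz B : B \in S -> g B != 0.
  move=> BS; apply/eqP => g0.
  have := @coef_derivm _ _ (beta B) f (P - beta B)%MM.
  rewrite -/(g B) g0 mcoeff0 eqxx submK ?bP //.
  by move/esym; rewrite mcoeff_eq0 PM.
have lmM B : B \in S -> (lm B + beta B)%MM \in msupp f.
  move=> BS; have := mlead_supp (gnz B BS); rewrite -[_ \in msupp _]negbK -mcoeff_eq0.
  by rewrite coef_derivm mcoeff_eq0 negbK.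
pose eS := enum S.
pose Ls := undup (map lm eS).
have step1 : (#|S| <= size Ls * size (msupp f))%N.
  pose phi B := (lm B, (lm B + beta B)%MM).
  rewrite cardE -(size_map phi) -(size_allpairs pair).
  apply: uniq_leq_size.
    rewrite map_inj_in_uniq ?enum_uniq // => B1 B2 _ _ E.
    have /= E1 := congr1 fst E; have /= E2 := congr1 snd E.
    by apply: beta_inj; rewrite -E1 in E2; exact: (addmI E2).
  move=> x /mapP [B]; rewrite mem_enum => BS ->.
  apply: allpairs_f; last exact: lmM.
  by rewrite mem_undup map_f // mem_enum.
have step2 : (size Ls <= d)%N.
  rewrite leqNgt; apply/negP => Hlt.
  pose rep L := nth set0 eS (index L (map lm eS)).
  have repS L : L \in Ls -> rep L \in S.
    rewrite mem_undup => H; rewrite -mem_enum /rep mem_nth //.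
    by rewrite -(size_map lm) index_mem.
  have lmrep L : L \in Ls -> lm (rep L) = L.
    rewrite mem_undup => H; rewrite /rep -(nth_map _ (lm set0)).
      by rewrite nth_index.
    by rewrite -(size_map lm) index_mem.
  pose v (i : 'I_d.+1) := g (rep (nth 0%MM Ls i)).
  have inL (i : 'I_d.+1) : nth 0%MM Ls i \in Ls.
    by rewrite mem_nth // (leq_trans (ltn_ord i)).
  apply: (Hd v).
    move=> i; exists [:: beta (rep (nth 0%MM Ls i))], (fun _ => 1).
    split; last by rewrite big_seq1 scale1r.
    have := repS _ (inL i); rewrite inE => /andP[_ /eqP Hk].
    by rewrite /= mdeg_beta Hk eqxx.
  apply: indep_mlead.
    by move=> i; apply: gnz; apply: repS.
  move=> i j /=; rewrite -/(lm _) -/(lm _) !lmrep //.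
  move=> /eqP; rewrite nth_uniq ?undup_uniq //.
  - by move/eqP/val_inj.
  - exact: (leq_trans (ltn_ord i)).
  - exact: (leq_trans (ltn_ord j)).
rewrite mulnC; apply: (leq_trans step1); rewrite leq_mul2r step2 orbT //.
Qed.

Theorem theorem3 (R : realFieldType) (n : nat) (f : {mpoly R[n]}) (k d : nat) :
  f != 0 -> is_dim_dspan k f d ->
  (\sum_(P <- msupp f) 'C(mnm_sup P, k)%:R * scoef f P ^+ 2)
    / ((size (msupp f))%:R * \sum_(P <- msupp f) scoef f P ^+ 2)
  <= (d%:R : R).
Proof.
move=> _ Hd.
set A := \sum_(P <- msupp f) scoef f P ^+ 2.
have A0 : 0 <= A by apply: sumr_ge0 => P _; exact: sqr_ge0.
have [->|Anz] := eqVneq A 0; first by rewrite mulr0 invr0 mulr0 ler0n.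
have Apos : 0 < A by rewrite lt_def Anz A0.
have mpos : (0 < size (msupp f))%N.
  move: Anz; rewrite /A; case: (msupp f) => //; by rewrite big_nil eqxx.
rewrite ler_pdivrMr; last by rewrite mulr_gt0 // ltr0n.
apply: (@le_trans _ _ (\sum_(P <- msupp f) (size (msupp f) * d)%:R * scoef f P ^+ 2)).
  rewrite big_seq [X in _ <= X]big_seq; apply: ler_sum => P PM.
  by apply: ler_wpM2r; [exact: sqr_ge0 | rewrite ler_nat; exact: core Hd].
by rewrite -mulr_sumr -/A natrM mulrA [_ * d%:R]mulrC.
Qed.
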